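(* Let $\mathbb{H}_1,\mathbb{H}_2$ be complex Hilbert spaces. Let $T\in \mathbb{L}(\mathbb{H}_1,\mathbb{H}_2)$ with $\|T\|=1$ be such that $\operatorname{dist}(T,\mathbb{K}(\mathbb{H}_1,\mathbb{H}_2))<1$. Then for $A\in \mathbb{L}(\mathbb{H}_1,\mathbb{H}_2)$, $T\perp_B A$ if and only if there exists $x\in M_T$ such that $\langle Ax,Tx\rangle=0$.
   Context: $\mathbb{L}(\mathbb{H}_1,\mathbb{H}_2)$ ($\mathbb{K}(\mathbb{H}_1,\mathbb{H}_2)$) is the space of bounded (compact) linear operators with the operator norm. $M_T=\{x\in\mathbb{H}_1:\|x\|=1,\ \|Tx\|=\|T\|\}$. Birkhoff–James orthogonality: $T\perp_B A$ means $\|T+\lambda A\|\geq \|T\|$ for every complex scalar $\lambda$. *)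

(* Defs.v *)
From HB Require Import structures.
From mathcomp Require Import all_boot all_order all_algebra.
From mathcomp Require Import boolp classical_sets reals.
From mathcomp Require Import complex.
Set Implicit Arguments.
Unset Strict Implicit.
Unset Printing Implicit Defensive.
Import Order.TTheory GRing.Theory Num.Theory.
Local Open Scope ring_scope.
Local Open Scope classical_set_scope.

Section Hilbert.
Variable R : realType.

Definition is_inner_product (V : lmodType R[i]) (ip : V -> V -> R[i]) : Prop :=
  [/\ (forall (a : R[i]) (x y z : V), ip (a *: x + y) z = a * ip x z + ip y z),
      (forall x y : V, ip y x = conjc (ip x y)),
      (forall x : V, 0 <= complex.Re (ip x x) /\ complex.Im (ip x x) = 0) &
      (forall x : V, ip x x = 0 -> x = 0)].

Definition ipnorm (V : lmodType R[i]) (ip : V -> V -> R[i]) (x : V) : R :=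
  Num.sqrt (complex.Re (ip x x)).

Definition converges_to (V : lmodType R[i]) (ip : V -> V -> R[i])
    (u : nat -> V) (l : V) : Prop :=
  forall e : R, 0 < e -> exists N : nat, forall n, (N <= n)%N ->
    ipnorm ip (u n - l) < e.

Definition cauchy_seq (V : lmodType R[i]) (ip : V -> V -> R[i])
    (u : nat -> V) : Prop :=
  forall e : R, 0 < e -> exists N : nat, forall m n, (N <= m)%N -> (N <= n)%N ->
    ipnorm ip (u m - u n) < e.

Definition is_hilbert (V : lmodType R[i]) (ip : V -> V -> R[i]) : Prop :=
  is_inner_product ip /\
  (forall u : nat -> V, cauchy_seq ip u -> exists l, converges_to ip u l).

Variables (V1 V2 : lmodType R[i]) (ip1 : V1 -> V1 -> R[i]) (ip2 : V2 -> V2 -> R[i]).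

Definition is_linear_op (T : V1 -> V2) : Prop :=
  forall (a : R[i]) (x y : V1), T (a *: x + y) = a *: T x + T y.

Definition bounded_op (T : V1 -> V2) : Prop :=
  is_linear_op T /\
  exists M : R, forall x : V1, ipnorm ip2 (T x) <= M * ipnorm ip1 x.

Definition compact_op (T : V1 -> V2) : Prop :=
  bounded_op T /\
  forall u : nat -> V1, (exists M : R, forall n, ipnorm ip1 (u n) <= M) ->
    exists (phi : nat -> nat) (l : V2),
      (forall n, (phi n < phi n.+1)%N) /\
      converges_to ip2 (fun n => T (u (phi n))) l.

Definition opnorm (T : V1 -> V2) : R :=
  sup [set ipnorm ip2 (T x) | x in [set x : V1 | ipnorm ip1 x = 1]].

Definition dist_compact (T : V1 -> V2) : R :=
  inf [set opnorm (fun x => T x - K x) | K in [set K | compact_op K]].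

Definition norm_attaining_set (T : V1 -> V2) : set V1 :=
  [set x | ipnorm ip1 x = 1 /\ ipnorm ip2 (T x) = opnorm T].

Definition bj_orth (T A : V1 -> V2) : Prop :=
  forall lambda : R[i], opnorm T <= opnorm (fun x => T x + lambda *: A x).

End Hilbert.

(* Main.v *)
Require Import Defs.
From HB Require Import structures.
From mathcomp Require Import all_boot all_order all_algebra.
From mathcomp Require Import boolp classical_sets reals.
From mathcomp Require Import complex.
From mathcomp Require Import ring lra.
Import Order.TTheory GRing.Theory Num.Theory.
Set Implicit Arguments.
Unset Strict Implicit.
Unset Printing Implicit Defensive.
Local Open Scope ring_scope.
Local Open Scope classical_set_scope.


Notation RE := complex.Re.
Notation IM := complex.Im.

Section CX.
Variable R : realType.
Local Notation C := R[i].
Implicit Types x y z : C.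

Lemma ReM x y : RE (x * y) = RE x * RE y - IM x * IM y.
Proof. by case: x => a b; case: y => c d. Qed.
Lemma ImM x y : IM (x * y) = RE x * IM y + IM x * RE y.
Proof. by case: x => a b; case: y => c d. Qed.
Lemma ReD x y : RE (x + y) = RE x + RE y.
Proof. by case: x => a b; case: y => c d. Qed.
Lemma ImD x y : IM (x + y) = IM x + IM y.
Proof. by case: x => a b; case: y => c d. Qed.
Lemma ReN x : RE (- x) = - RE x.
Proof. by case: x. Qed.
Lemma ImN x : IM (- x) = - IM x.
Proof. by case: x. Qed.
Lemma ReB x y : RE (x - y) = RE x - RE y.
Proof. by rewrite ReD ReN. Qed.
Lemma ImB x y : IM (x - y) = IM x - IM y.
Proof. by rewrite ImD ImN. Qed.
Lemma ReJ x : RE (x^*)%C = RE x.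
Proof. by case: x. Qed.
Lemma ImJ x : IM (x^*)%C = - IM x.
Proof. by case: x. Qed.
Lemma ReC (r : R) : RE (r%:C)%C = r. Proof. by []. Qed.
Lemma ImC (r : R) : IM (r%:C)%C = 0. Proof. by []. Qed.
Lemma Re0 : RE (0 : C) = 0. Proof. by []. Qed.
Lemma Im0 : IM (0 : C) = 0. Proof. by []. Qed.
Lemma Re1 : RE (1 : C) = 1. Proof. by []. Qed.
Lemma Im1 : IM (1 : C) = 0. Proof. by []. Qed.
Lemma ReV x : RE (x^-1) = RE x / (RE x ^+2 + IM x ^+ 2).
Proof. by case: x => a b. Qed.
Lemma ImV x : IM (x^-1) = - (IM x / (RE x ^+2 + IM x ^+ 2)).
Proof. by case: x => a b. Qed.
Lemma cx_eq x y : RE x = RE y -> IM x = IM y -> x = y.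
Proof. by case: x => a b; case: y => c d /= -> ->. Qed.

Lemma conjcM' x y : ((x * y)^*)%C = (x^*)%C * (y^*)%C.
Proof. by apply: cx_eq; rewrite ?ReM ?ImM ?ReJ ?ImJ ?ReM ?ImM; ring. Qed.
Lemma conjcD' x y : ((x + y)^*)%C = (x^*)%C + (y^*)%C.
Proof. by apply: cx_eq; rewrite ?ReD ?ImD ?ReJ ?ImJ ?ReD ?ImD; ring. Qed.
Lemma conjcN' x : ((- x)^*)%C = - (x^*)%C.
Proof. by apply: cx_eq; rewrite ?ReN ?ImN ?ReJ ?ImJ ?ReN ?ImN. Qed.
Lemma conjcR' (r : R) : (((r%:C)%C)^*)%C = (r%:C)%C.
Proof. by apply: cx_eq; rewrite ?ReJ ?ImJ ?ReC ?ImC ?oppr0. Qed.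
Lemma conjcK' x : ((x^*)^*)%C = x.
Proof. by apply: cx_eq; rewrite ?ReJ ?ImJ ?opprK. Qed.
Lemma realcM (r s : R) : (r%:C)%C * (s%:C)%C = ((r * s)%:C)%C.
Proof. by apply: cx_eq; rewrite ?ReM ?ImM ?ReC ?ImC; ring. Qed.
Lemma realcD (r s : R) : (r%:C)%C + (s%:C)%C = ((r + s)%:C)%C.
Proof. by apply: cx_eq; rewrite ?ReD ?ImD ?ReC ?ImC; ring. Qed.

Definition cn2 x := RE x ^+ 2 + IM x ^+ 2.
Definition nc x := Num.sqrt (cn2 x).

Lemma cn2_ge0 x : 0 <= cn2 x.
Proof. by rewrite /cn2 addr_ge0 ?sqr_ge0. Qed.
Lemma cn2M x y : cn2 (x * y) = cn2 x * cn2 y.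
Proof. rewrite /cn2 ReM ImM; ring. Qed.
Lemma cn2J x : cn2 (x^*)%C = cn2 x.
Proof. by rewrite /cn2 ReJ ImJ sqrrN. Qed.
Lemma cn2C (r : R) : cn2 (r%:C)%C = r ^+ 2.
Proof. by rewrite /cn2 ReC ImC expr0n /= addr0. Qed.
Lemma cn2_eq0 x : cn2 x = 0 -> x = 0.
Proof.
rewrite /cn2 => h; apply: cx_eq; rewrite ?Re0 ?Im0.
  by apply/eqP; rewrite -sqrf_eq0; apply/eqP; nra.
by apply/eqP; rewrite -sqrf_eq0; apply/eqP; nra.
Qed.
Lemma mulcJ x : x * (x^*)%C = (cn2 x)%:C%C.
Proof. apply: cx_eq; rewrite ?ReM ?ImM ?ReJ ?ImJ ?ReC ?ImC /cn2; ring. Qed.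
Lemma le_sqrt_sq (a b : R) : 0 <= b -> a ^+ 2 <= b -> a <= Num.sqrt b.
Proof.
move=> hb hab; apply: le_trans (ler_norm a) _.
by rewrite -sqrtr_sqr ler_sqrt.
Qed.
Lemma Re_le_nc x : RE x <= nc x.
Proof. by apply: le_sqrt_sq; rewrite ?cn2_ge0 // /cn2 lerDl sqr_ge0. Qed.
Lemma nc_ge0 x : 0 <= nc x. Proof. exact: sqrtr_ge0. Qed.
Lemma nc_sq x : nc x ^+ 2 = cn2 x. Proof. by rewrite sqr_sqrtr ?cn2_ge0. Qed.
Lemma ncM x y : nc (x * y) = nc x * nc y.
Proof. by rewrite /nc cn2M sqrtrM ?cn2_ge0. Qed.
Lemma ncJ x : nc (x^*)%C = nc x.
Proof. by rewrite /nc cn2J. Qed.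
Lemma ncD_sq x y : cn2 (x + y) <= (nc x + nc y) ^+ 2.
Proof.
have h : RE x * RE y + IM x * IM y <= nc x * nc y.
  have := Re_le_nc (x * (y^*)%C); rewrite ncM ncJ ReM ReJ ImJ.
  by rewrite mulrN opprK.
rewrite sqrrD !nc_sq /cn2 ReD ImD; nra.
Qed.
Lemma ncD x y : nc (x + y) <= nc x + nc y.
Proof.
rewrite /nc; apply: le_trans (_ : Num.sqrt ((nc x + nc y)^+2) <= _).
  by rewrite ler_sqrt ?sqr_ge0 // ncD_sq.
by rewrite sqrtr_sqr ger0_norm ?addr_ge0 ?nc_ge0.
Qed.
Lemma ncN x : nc (- x) = nc x.
Proof. by rewrite /nc /cn2 ReN ImN !sqrrN. Qed.
Lemma sqrt_le_sq (a b : R) : 0 <= b -> a <= b ^+ 2 -> Num.sqrt a <= b.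
Proof.
move=> hb hab; apply: le_trans (_ : Num.sqrt (b ^+ 2) <= _).
  by rewrite ler_sqrt ?sqr_ge0.
by rewrite sqrtr_sqr ger0_norm.
Qed.
End CX.


Section IP.
Variable R : realType.
Local Notation C := R[i].
Variables (V : lmodType C) (ip : V -> V -> C).
Hypothesis hip : is_inner_product ip.
Implicit Types x y z : V.

Lemma ipAx (a : C) x y z : ip (a *: x + y) z = a * ip x z + ip y z.
Proof. by case: hip. Qed.
Lemma ipC x y : ip y x = (ip x y)^*%C.
Proof. by case: hip. Qed.
Lemma ip0l z : ip 0 z = 0.
Proof.
have := ipAx 1 0 0 z; rewrite scale1r addr0 mul1r => h.
by apply: (addrI (ip 0 z)); rewrite addr0 -h.
Qed.
Lemma ipDl x y z : ip (x + y) z = ip x z + ip y z.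
Proof. by rewrite -[x in LHS]scale1r ipAx mul1r. Qed.
Lemma ipZl (a : C) x z : ip (a *: x) z = a * ip x z.
Proof. by rewrite -[_ *: x]addr0 ipAx ip0l addr0. Qed.
Lemma ipNl x z : ip (- x) z = - ip x z.
Proof. by rewrite -scaleN1r ipZl mulN1r. Qed.
Lemma ipBl x y z : ip (x - y) z = ip x z - ip y z.
Proof. by rewrite ipDl ipNl. Qed.
Lemma ip0r z : ip z 0 = 0.
Proof. by rewrite ipC ip0l conjc0. Qed.
Lemma ipDr x y z : ip z (x + y) = ip z x + ip z y.
Proof. by rewrite ipC ipDl conjcD' -!ipC. Qed.
Lemma ipZr (a : C) x z : ip z (a *: x) = (a^*)%C * ip z x.
Proof. by rewrite ipC ipZl conjcM' -ipC. Qed.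
Lemma ipNr x z : ip z (- x) = - ip z x.
Proof. by rewrite ipC ipNl conjcN' -ipC. Qed.
Lemma ipBr x y z : ip z (x - y) = ip z x - ip z y.
Proof. by rewrite ipDr ipNr. Qed.

Definition n2 x := RE (ip x x).
Lemma n2_ge0 x : 0 <= n2 x.
Proof. by case: hip => _ _ /(_ x) []. Qed.
Lemma ipxx x : ip x x = (n2 x)%:C%C.
Proof. by apply: cx_eq => //=; case: hip => _ _ /(_ x) []. Qed.
Lemma n2_eq0 x : n2 x = 0 -> x = 0.
Proof. by move=> h; case: hip => _ _ _; apply; rewrite ipxx h. Qed.
Lemma n2D x y : n2 (x + y) = n2 x + n2 y + 2 * RE (ip x y).
Proof.
rewrite /n2 ipDl !ipDr !ReD [ip y x]ipC ReJ; ring.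
Qed.
Lemma n2B x y : n2 (x - y) = n2 x + n2 y - 2 * RE (ip x y).
Proof.
rewrite n2D /n2 ipNl ipNr opprK ipNr ReN; ring.
Qed.
Lemma n2Z (a : C) x : n2 (a *: x) = cn2 a * n2 x.
Proof.
rewrite /n2 ipZl ipZr mulrA mulcJ ipxx -rmorphM.
by [].
Qed.
Lemma n2N x : n2 (- x) = n2 x.
Proof. rewrite -scaleN1r n2Z /cn2 ReN ImN Re1 Im1; ring. Qed.

Lemma CS x y : cn2 (ip x y) <= n2 x * n2 y.
Proof.
have [hy|hy] := eqVneq (n2 y) 0.
  move/n2_eq0: hy => ->; rewrite ip0r /cn2 Re0 Im0 /n2 ip0l Re0 mulr0.
  by rewrite !expr2 !mul0r addr0.
have hy0 : 0 < n2 y by rewrite lt_def hy n2_ge0.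
set p := ip x y; set N := n2 y.
set t := ((N^-1)%:C)%C * p.
have h := n2_ge0 (x - t *: y).
rewrite n2B n2Z ipZr in h.
have e1 : (t^*)%C * p = ((N^-1 * cn2 p)%:C)%C.
  by rewrite /t conjcM' conjcR' -mulrA [(p^*)%C * p]mulrC mulcJ realcM.
have e2 : cn2 t = N^-1 ^+ 2 * cn2 p by rewrite /t cn2M cn2C.
rewrite e1 e2 ReC -/N in h.
have e3 : N ^-1 ^+ 2 * cn2 p * N = N^-1 * cn2 p.
  by field; rewrite hy.
rewrite e3 in h.
have : cn2 p / N <= n2 x by rewrite mulrC; lra.
by rewrite ler_pdivrMr.
Qed.

Local Notation nrm := (ipnorm ip).
Lemma ipn_ge0 x : 0 <= nrm x. Proof. exact: sqrtr_ge0. Qed.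
Lemma ipn_sq x : nrm x ^+ 2 = n2 x. Proof. by rewrite sqr_sqrtr // n2_ge0. Qed.
Lemma ipnE x : nrm x = Num.sqrt (n2 x). Proof. by []. Qed.
Lemma CSn x y : nc (ip x y) <= nrm x * nrm y.
Proof.
apply: sqrt_le_sq; first by rewrite mulr_ge0 ?ipn_ge0.
by rewrite exprMn !ipn_sq CS.
Qed.
Lemma CSR x y : RE (ip x y) <= nrm x * nrm y.
Proof. exact: le_trans (Re_le_nc _) (CSn x y). Qed.
Lemma ipnD x y : nrm (x + y) <= nrm x + nrm y.
Proof.
apply: sqrt_le_sq; first by rewrite addr_ge0 ?ipn_ge0.
rewrite -[RE _]/(n2 (x + y)) n2D sqrrD !ipn_sq; have := CSR x y; lra.
Qed.
Lemma ipnZ (a : C) x : nrm (a *: x) = nc a * nrm x.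
Proof. by rewrite ipnE n2Z sqrtrM ?cn2_ge0. Qed.
Lemma ipnN x : nrm (- x) = nrm x.
Proof. by rewrite ipnE n2N. Qed.
Lemma ipnB x y : nrm (x - y) = nrm (y - x).
Proof. by rewrite -ipnN opprB. Qed.
Lemma ipn_eq0 x : nrm x = 0 -> x = 0.
Proof. by move=> h; apply: n2_eq0; rewrite -ipn_sq h expr0n. Qed.
Lemma ipn0 : nrm 0 = 0.
Proof. by rewrite ipnE /n2 ip0l Re0 sqrtr0. Qed.
Lemma ipn_rev x y : nrm x - nrm y <= nrm (x - y).
Proof. have := ipnD (x - y) y; rewrite subrK; lra. Qed.
Lemma ipn_rev' x y : nrm y - nrm x <= nrm (x - y).
Proof. rewrite ipnB; exact: ipn_rev. Qed.
Lemma para x y : n2 (x + y) + n2 (x - y) = 2 * n2 x + 2 * n2 y.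
Proof. rewrite n2D n2B; ring. Qed.
End IP.


Section LinOp.
Variable R : realType.
Local Notation C := R[i].
Variables (V1 V2 : lmodType C).
Variable L : V1 -> V2.
Hypothesis hL : is_linear_op L.
Lemma lin0 : L 0 = 0.
Proof.
have := hL 1 0 0; rewrite scale1r addr0 scale1r => h.
by apply: (addrI (L 0)); rewrite addr0 -h.
Qed.
Lemma linD x y : L (x + y) = L x + L y.
Proof. by rewrite -[x in LHS]scale1r hL scale1r. Qed.
Lemma linZ (a : C) x : L (a *: x) = a *: L x.
Proof. by rewrite -[a *: x]addr0 hL lin0 addr0. Qed.
Lemma linN x : L (- x) = - L x.
Proof. by rewrite -scaleN1r linZ scaleN1r. Qed.
Lemma linB x y : L (x - y) = L x - L y.
Proof. by rewrite linD linN. Qed.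
End LinOp.

Lemma ncR (R : realType) (r : R) : nc ((r%:C)%C) = `|r|.
Proof. by rewrite /nc cn2C sqrtr_sqr. Qed.

Section Ops.
Variable R : realType.
Local Notation C := R[i].
Variables (V1 V2 : lmodType C) (ip1 : V1 -> V1 -> C) (ip2 : V2 -> V2 -> C).
Hypothesis hip1 : is_inner_product ip1.
Hypothesis hip2 : is_inner_product ip2.
Hypothesis hunit : exists u, ipnorm ip1 u = 1.
Local Notation n1 := (ipnorm ip1).
Local Notation n2' := (ipnorm ip2).
Local Notation opn := (opnorm ip1 ip2).
Local Notation bnd := (bounded_op ip1 ip2).

Definition SL (L : V1 -> V2) := [set n2' (L x) | x in [set x | n1 x = 1]].

Lemma SL_ne L : SL L !=set0.
Proof. by case: hunit => u hu; exists (n2' (L u)), u. Qed.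

Lemma SL_ub L : bnd L -> has_ubound (SL L).
Proof.
case=> _ [M hM]; exists M => _ [x /= hx <-].
by have := hM x; rewrite hx mulr1.
Qed.

Lemma opn_ub L x : bnd L -> n1 x = 1 -> n2' (L x) <= opn L.
Proof. by move=> hb hx; apply: ub_le_sup (SL_ub hb) _ _; exists x. Qed.

Lemma opn_ge0 L : bnd L -> 0 <= opn L.
Proof.
move=> hb; case: hunit => u hu.
exact: le_trans (ipn_ge0 ip2 _) (opn_ub hb hu).
Qed.

Lemma opn_bound L x : bnd L -> n2' (L x) <= opn L * n1 x.
Proof.
move=> hb; have hl := hb.1.
have [hx|hx] := eqVneq (n1 x) 0.
  by rewrite (ipn_eq0 hip1 hx) lin0 // !ipn0 // mulr0.
have hx0 : 0 < n1 x by rewrite lt_def hx ipn_ge0.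
set u := (((n1 x)^-1)%:C)%C *: x.
have hinv : 0 <= (n1 x)^-1 by rewrite invr_ge0 ltW.
have hu : n1 u = 1.
  by rewrite ipnZ // ncR (ger0_norm hinv) mulVf.
have := opn_ub hb hu; rewrite /u linZ // ipnZ // ncR (ger0_norm hinv).
by rewrite mulrC ler_pdivrMr.
Qed.

Lemma opn_approx L e : 0 < e -> exists x, n1 x = 1 /\ opn L - e < n2' (L x).
Proof.
move=> he; have h1 : opn L - e < opn L by rewrite ltrBlDr ltrDl.
by have [_ [x hx <-] h] := sup_gt (SL_ne L) h1; exists x.
Qed.

Lemma opn_le L M : (forall x, n1 x = 1 -> n2' (L x) <= M) -> opn L <= M.
Proof. by move=> h; apply: ge_sup (SL_ne L) _ => _ [x hx <-]; apply: h. Qed.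

Lemma bnd_comb L1 L2 (l : C) : bnd L1 -> bnd L2 ->
  bnd (fun x => L1 x + l *: L2 x).
Proof.
move=> h1 h2; split.
  move=> a x y; rewrite h1.1 h2.1 !scalerDr !scalerA (mulrC l a) -!addrA.
  by congr (_ + _); rewrite addrCA.
exists (opn L1 + nc l * opn L2) => x.
apply: le_trans (ipnD hip2 _ _) _; rewrite ipnZ // mulrDl -mulrA.
by apply: lerD; rewrite ?opn_bound // ler_wpM2l ?nc_ge0 ?opn_bound.
Qed.

Lemma bnd_sub L1 L2 : bnd L1 -> bnd L2 -> bnd (fun x => L1 x - L2 x).
Proof.
move=> h1 h2; have := bnd_comb (-1) h1 h2.
by congr bnd; apply: funext => x; rewrite scaleN1r.
Qed.

Lemma compact0 : compact_op ip1 ip2 (fun _ => 0).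
Proof.
split.
  split; first by move=> a x y; rewrite scaler0 addr0.
  by exists 0 => x; rewrite ipn0 // mul0r.
move=> u _; exists id, 0; split => // e he; exists 0%N => n _.
by rewrite subrr ipn0.
Qed.
End Ops.


Section Real.
Variable R : realType.
Lemma le_eps (a b : R) : (forall e, 0 < e -> a <= b + e) -> a <= b.
Proof.
move=> h; rewrite leNgt; apply/negP => hba.
have := h ((a - b) / 2); rewrite divr_gt0 ?subr_gt0 // => /(_ isT); lra.
Qed.
Lemma small_ev (Cc e : R) : 0 <= Cc -> 0 < e ->
  exists N, forall n, (N <= n)%N -> Cc / (n.+1)%:R < e.
Proof.
move=> hC he; exists (Num.Def.archi_bound (Cc / e)) => n hn.
have h1 := archi_boundP (divr_ge0 hC (ltW he)).
have h2 : (Num.Def.archi_bound (Cc / e))%:R < (n.+1)%:R :> R.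
  by rewrite ltr_nat ltnS.
rewrite ltr_pdivrMr ?ltr0Sn // mulrC -ltr_pdivrMr //; lra.
Qed.
Lemma incr_ge (phi : nat -> nat) : (forall n, (phi n < phi n.+1)%N) ->
  forall n, (n <= phi n)%N.
Proof.
move=> h; elim=> [|n IH] //; exact: leq_ltn_trans IH (h n).
Qed.
Lemma div_mono (Cc : R) (m n : nat) : 0 <= Cc -> (m <= n)%N ->
  Cc / (n.+1)%:R <= Cc / (m.+1)%:R.
Proof.
move=> hC hmn; rewrite ler_wpM2l // lef_pV2 ?posrE ?ltr0Sn // ler_nat ltnS //.
Qed.
End Real.

Section Main.
Variable R : realType.
Local Notation C := R[i].
Variables (V1 V2 : lmodType C) (ip1 : V1 -> V1 -> C) (ip2 : V2 -> V2 -> C).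
Hypothesis hip1 : is_inner_product ip1.
Hypothesis hip2 : is_inner_product ip2.
Hypothesis hcomp1 : forall u : nat -> V1, cauchy_seq ip1 u -> exists l, converges_to ip1 u l.
Hypothesis hunit : exists u, ipnorm ip1 u = 1.
Local Notation n1 := (ipnorm ip1).
Local Notation n2' := (ipnorm ip2).
Local Notation opn := (opnorm ip1 ip2).
Local Notation bnd := (bounded_op ip1 ip2).
Variable T : V1 -> V2.
Hypothesis hT : bnd T.
Hypothesis hnT : opn T = 1.
Variable K : V1 -> V2.
Hypothesis hK : compact_op ip1 ip2 K.
Hypothesis hc : opn (fun x => T x - K x) < 1.

Lemma T_le x : n2' (T x) <= n1 x.
Proof. by have := opn_bound hip1 hip2 x hT; rewrite hnT mul1r. Qed.

Lemma sq_le (a b : R) : 0 <= a -> a <= b -> a ^+ 2 <= b ^+ 2.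
Proof. move=> ha hab; nra. Qed.

Lemma T_sq x : n2 ip2 (T x) <= n2 ip1 x.
Proof. by rewrite -!ipn_sq // sq_le ?ipn_ge0 ?T_le. Qed.

Lemma approx (x : nat -> V1) (Cc : R) : 0 <= Cc ->
  (forall n, n1 (x n) = 1) ->
  (forall n, 1 - Cc / (n.+1)%:R <= n2 ip2 (T (x n))) ->
  exists phi y, (forall n, (phi n < phi n.+1)%N) /\
    converges_to ip1 (fun n => x (phi n)) y /\ n1 y = 1 /\ n2' (T y) = 1.
Proof.
move=> hC0 hx hTx.
have hbx : exists M, forall n, n1 (x n) <= M by exists 1 => n; rewrite hx.
case: hK => hKb /(_ x hbx) [phi [l [hphi hKl]]].
pose z := fun n => x (phi n).
set c := opn (fun x => T x - K x).
have hc1 : c < 1 := hc.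
have hTK := bnd_sub hip1 hip2 hT hKb.
have hc0 : 0 <= c := opn_ge0 hunit hTK.
have hzn n : n1 (z n) = 1 by rewrite /z hx.
have hzn2 n : n2 ip1 (z n) = 1 by rewrite -ipn_sq // hzn expr1n.
have hTz n : 1 - Cc / (n.+1)%:R <= n2 ip2 (T (z n)).
  apply: le_trans (hTx (phi n)); rewrite lerD2l lerN2.
  exact: div_mono (incr_ge hphi n).
have hcauchy : cauchy_seq ip1 z.
  move=> e he.
  have hg : 0 < (1 - c ^+ 2) * e ^+ 2.
    by rewrite mulr_gt0 ?exprn_gt0 // subr_gt0; nra.
  set g := (1 - c ^+ 2) * e ^+ 2 in hg.
  pose dl := Num.min (1/4) (g/40).
  have hdl : 0 < dl by rewrite lt_min; apply/andP; split; lra.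
  have hdl1 : dl <= 1/4 by rewrite ge_min lexx.
  have hdl2 : dl <= g/40 by rewrite ge_min lexx orbT.
  have [N1 hN1] := hKl dl hdl.
  have hg8 : 0 < g / 8 by lra.
  have [N2 hN2] := small_ev hC0 hg8.
  exists (maxn N1 N2) => n m hn hm.
  have hn1 : (N1 <= n)%N by apply: leq_trans hn; rewrite leq_maxl.
  have hn2 : (N2 <= n)%N by apply: leq_trans hn; rewrite leq_maxr.
  have hm1 : (N1 <= m)%N by apply: leq_trans hm; rewrite leq_maxl.
  have hm2 : (N2 <= m)%N by apply: leq_trans hm; rewrite leq_maxr.
  have hTn : 1 - g / 8 < n2 ip2 (T (z n)).
    by apply: lt_le_trans (hTz n); rewrite ltrD2l ltrN2; exact: hN2.
  have hTm : 1 - g / 8 < n2 ip2 (T (z m)).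
    by apply: lt_le_trans (hTz m); rewrite ltrD2l ltrN2; exact: hN2.
  have hKn : n2' (K (z n) - l) < dl := hN1 n hn1.
  have hKm : n2' (K (z m) - l) < dl := hN1 m hm1.
  have heta : n2' (K (z n) - K (z m)) < 2 * dl.
    have -> : K (z n) - K (z m) = (K (z n) - l) + - (K (z m) - l).
      by rewrite opprB addrA subrK.
    apply: le_lt_trans (ipnD hip2 _ _) _; rewrite ipnN //; lra.
  have heta0 : 0 <= n2' (K (z n) - K (z m)) := ipn_ge0 _ _.
  set eta := n2' (K (z n) - K (z m)) in heta heta0.
  have hd0 : 0 <= n1 (z n - z m) := ipn_ge0 _ _.
  set d := n1 (z n - z m) in hd0 *.
  have hd2 : d <= 2.
    by have := ipnD hip1 (z n) (- z m); rewrite ipnN // !hzn.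
  have hpl : n2 ip1 (z n + z m) = 4 - d ^+ 2.
    have := para hip1 (z n) (z m); rewrite !hzn2 -(ipn_sq hip1 (z n - z m)) -/d.
    lra.
  have hsum : n2 ip2 (T (z n) + T (z m)) <= 4 - d ^+ 2.
    by rewrite -(linD hT.1) -hpl; exact: T_sq.
  have hpl2 := para hip2 (T (z n)) (T (z m)).
  have hdiff : n2' (T (z n) - T (z m)) <= eta + c * d.
    have -> : T (z n) - T (z m) =
       (K (z n) - K (z m)) + ((fun x => T x - K x) (z n - z m)).
      by rewrite /= (linB hT.1) (linB hKb.1) [RHS]addrC subrK.
    apply: le_trans (ipnD hip2 _ _) _; apply: lerD => //.
    exact: (opn_bound hip1 hip2 (z n - z m) hTK).
  have hsq : n2 ip2 (T (z n) - T (z m)) <= (eta + c * d) ^+ 2.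
    by rewrite -ipn_sq //; apply: sq_le => //; exact: ipn_ge0.
  have k1 : d ^+ 2 - g / 2 < (eta + c * d) ^+ 2 by lra.
  have hc1' : c <= 1 by lra.
  have hcd : c * d <= 2 by nra.
  have heta1 : eta < 1 / 2 by lra.
  have heta2 : eta < g / 20 by lra.
  have k2 : (eta + c * d) ^+ 2 <= c ^+ 2 * d ^+ 2 + 4 * eta + eta / 2 by nra.
  have k3 : (1 - c ^+ 2) * d ^+ 2 < (1 - c ^+ 2) * e ^+ 2.
    rewrite -/g; lra.
  have hc2 : 0 < 1 - c ^+ 2 by nra.
  rewrite ltr_pM2l // in k3.
  rewrite ltNge; apply/negP => hed.
  have := sq_le (ltW he) hed; lra.
have [y hy] := hcomp1 hcauchy.
have hy1 : n1 y = 1.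
  apply/le_anti/andP; split.
  - apply: le_eps => e he; have [N hN] := hy e he; have := hN N (leqnn N).
    by have := ipn_rev' hip1 (x (phi N)) y; rewrite hx; lra.
  - apply: le_eps => e he; have [N hN] := hy e he; have := hN N (leqnn N).
    by have := ipn_rev hip1 (x (phi N)) y; rewrite hx; lra.
exists phi, y; split => //; split => //; split => //.
apply/le_anti/andP; split; first by rewrite -hy1 T_le.
apply: le_eps => e he.
have he2 : 0 < e / 2 by lra.
have [N hN] := hy (e/2) he2.
have [N2 hN2] := small_ev hC0 he2.
pose n := maxn N N2.
have h1 := hN n (leq_maxl _ _).
have h2 := hN2 n (leq_maxr _ _).
have h3 := hTz n.
set q := Cc / (n.+1)%:R in h2 h3.
have h4 : n2' (T (z n)) <= 1 by rewrite -(hzn n) T_le.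
have h4' : 0 <= n2' (T (z n)) := ipn_ge0 _ _.
have h5 : n2 ip2 (T (z n)) <= n2' (T (z n)) by rewrite -ipn_sq //; nra.
have h6 := ipn_rev hip2 (T (z n)) (T y).
have h7 : n2' (T (z n) - T y) <= n1 (z n - y).
  by rewrite -(linB hT.1); exact: T_le.
rewrite /z in h1 h3 h4 h4' h5 h6 h7.
lra.
Qed.
End Main.


Section Main2.
Variable R : realType.
Local Notation C := R[i].
Variables (V1 V2 : lmodType C) (ip1 : V1 -> V1 -> C) (ip2 : V2 -> V2 -> C).
Hypothesis hip1 : is_inner_product ip1.
Hypothesis hip2 : is_inner_product ip2.
Hypothesis hcomp1 : forall u : nat -> V1, cauchy_seq ip1 u -> exists l, converges_to ip1 u l.
Hypothesis hunit : exists u, ipnorm ip1 u = 1.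
Local Notation n1 := (ipnorm ip1).
Local Notation n2' := (ipnorm ip2).
Local Notation opn := (opnorm ip1 ip2).
Local Notation bnd := (bounded_op ip1 ip2).
Variable T : V1 -> V2.
Hypothesis hT : bnd T.
Hypothesis hnT : opn T = 1.

Lemma Tiso x w : n1 x = 1 -> n2' (T x) = 1 -> ip2 (T x) (T w) = ip1 x w.
Proof.
move=> hx hTx.
have hx2 : n2 ip1 x = 1 by rewrite -ipn_sq // hx expr1n.
have hTx2 : n2 ip2 (T x) = 1 by rewrite -ipn_sq // hTx expr1n.
set b := ip1 x w - ip2 (T x) (T w).
suff : b = 0 by move/eqP; rewrite subr_eq0 => /eqP ->.
have key s : 0 <= n2 ip1 w - n2 ip2 (T w) + 2 * RE ((s^*)%C * (b^*)%C).
  have := T_sq hip1 hip2 hT hnT (w + s *: x).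
  rewrite (linD hT.1) (linZ hT.1) !n2D // !n2Z // hx2 hTx2 !ipZr //.
  rewrite /b conjcD' conjcN' -!ipC // mulrDr mulrN ReD ReN.
  lra.
set D := n2 ip1 w - n2 ip2 (T w) in key.
have hD : 0 <= D by rewrite /D subr_ge0; exact: T_sq.
apply: cn2_eq0; apply/eqP; rewrite eq_le cn2_ge0 andbT leNgt; apply/negP => hb.
set r := (D + 1) / cn2 b.
have := key (- ((r%:C)%C * (b^*)%C)).
rewrite conjcN' conjcM' conjcR' conjcK' mulNr -mulrA mulcJ realcM ReN ReC.
rewrite /r divfK ?gt_eqF //; lra.
Qed.

Definition MT x := n1 x = 1 /\ n2' (T x) = 1.

Lemma span_iso x0 x1 (b : C) : MT x0 -> MT x1 ->
  n2 ip2 (T (x0 + b *: x1)) = n2 ip1 (x0 + b *: x1).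
Proof.
move=> [h0 h0'] [h1 h1'].
set u := x0 + b *: x1.
have E w : ip2 (T u) (T w) = ip1 u w.
  by rewrite /u (linD hT.1) (linZ hT.1) ipDl // ipZl // !Tiso // -ipZl // -ipDl.
by rewrite /n2 E.
Qed.

Lemma normalize u : 0 < n1 u -> n2 ip2 (T u) = n2 ip1 u ->
  MT ((((n1 u)^-1)%:C)%C *: u).
Proof.
move=> hu h.
have hTu : n2' (T u) = n1 u by rewrite !ipnE h.
have hinv : 0 <= (n1 u)^-1 by rewrite invr_ge0 ltW.
split.
  by rewrite ipnZ // ncR (ger0_norm hinv) mulVf // gt_eqF.
by rewrite (linZ hT.1) ipnZ // ncR (ger0_norm hinv) hTu mulVf // gt_eqF.
Qed.
End Main2.


Lemma ReRM (R : realType) (t : R) (z : R[i]) : RE ((t%:C)%C * z) = t * RE z.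
Proof. by case: z => u v /=; rewrite mul0r subr0. Qed.
Lemma nc1 (R : realType) (z : R[i]) : cn2 z = 1 -> nc z = 1.
Proof. by rewrite /nc => ->; rewrite sqrtr1. Qed.

Section Main3.
Variable R : realType.
Local Notation C := R[i].
Variables (V1 V2 : lmodType C) (ip1 : V1 -> V1 -> C) (ip2 : V2 -> V2 -> C).
Hypothesis hip1 : is_inner_product ip1.
Hypothesis hip2 : is_inner_product ip2.
Hypothesis hcomp1 : forall u : nat -> V1, cauchy_seq ip1 u -> exists l, converges_to ip1 u l.
Hypothesis hunit : exists u, ipnorm ip1 u = 1.
Local Notation n1 := (ipnorm ip1).
Local Notation n2' := (ipnorm ip2).
Local Notation opn := (opnorm ip1 ip2).
Local Notation bnd := (bounded_op ip1 ip2).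
Variable T : V1 -> V2.
Hypothesis hT : bnd T.
Hypothesis hnT : opn T = 1.
Variable K : V1 -> V2.
Hypothesis hK : compact_op ip1 ip2 K.
Hypothesis hc : opn (fun x => T x - K x) < 1.
Variable A : V1 -> V2.
Hypothesis hA : bnd A.
Local Notation a := (opn A).
Definition Q y := ip2 (A y) (T y).

Lemma ha : 0 <= a. Proof. by have := opn_ge0 hunit hA. Qed.

Lemma A_le w : n2' (A w) <= a * n1 w.
Proof. by have := opn_bound hip1 hip2 w hA. Qed.

Lemma Qdiff y z : n1 y <= 1 -> n1 z <= 1 -> nc (Q z - Q y) <= 2 * a * n1 (z - y).
Proof.
move=> hy hz.
have -> : Q z - Q y = ip2 (A z - A y) (T z) + ip2 (A y) (T z - T y).
  by rewrite /Q ipBl // ipBr //; ring.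
apply: le_trans (ncD _ _) _.
have h1 := CSn hip2 (A z - A y) (T z).
have h2 := CSn hip2 (A y) (T z - T y).
rewrite -(linB hA.1) in h1 *; rewrite -(linB hT.1) in h2 *.
have h3 := A_le (z - y).
have h4 := A_le y.
have h5 := T_le hip1 hip2 hT hnT z.
have h6 := T_le hip1 hip2 hT hnT (z - y).
have h7 := ipn_ge0 ip2 (A (z - y)).
have h8 := ipn_ge0 ip2 (T z).
have h9 := ipn_ge0 ip2 (A y).
have h10 := ipn_ge0 ip2 (T (z - y)).
have h11 := ipn_ge0 ip1 (z - y).
have h12 := ipn_ge0 ip1 y.
have h0 := ha.
have k1 : n2' (A (z - y)) * n2' (T z) <= a * n1 (z - y) by nra.
have k2 : n2' (A y) * n2' (T (z - y)) <= a * n1 (z - y) by nra.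
lra.
Qed.

Lemma halfplane (hbj : bj_orth ip1 ip2 T A) (mu : C) : cn2 mu = 1 ->
  exists y, MT ip1 ip2 T y /\ 0 <= RE (mu * Q y).
Proof.
move=> hmu.
have h0 := ha.
pose Cc := 2 + 2 * a + a ^+ 2.
have hC : 0 <= Cc by rewrite /Cc; have := sqr_ge0 a; lra.
have hncmu : nc mu = 1 := nc1 hmu.
have step n : exists x, n1 x = 1 /\ 1 - Cc / (n.+1)%:R <= n2 ip2 (T x) /\
    - (Cc / (n.+1)%:R) <= RE (mu * Q x).
  set t := ((n.+1)%:R : R)^-1.
  have ht0 : 0 < t by rewrite invr_gt0 ltr0Sn.
  have ht1 : t <= 1 by rewrite invf_le1 ?ler1n ?ltr0Sn.
  pose L := fun x => T x + ((t%:C)%C * mu) *: A x.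
  have hL : bnd L := bnd_comb hip1 hip2 _ hT hA.
  have h1 : 1 <= opn L by rewrite -hnT; exact: hbj.
  have ht2 : 0 < t ^+ 2 by rewrite exprn_gt0.
  have [x [hx hLx]] := opn_approx ip2 hunit L ht2.
  exists x; split => //.
  have hLx' : 1 - t ^+ 2 < n2' (L x) by lra.
  have hLx2 : 1 - 2 * t ^+ 2 <= n2 ip2 (L x).
    rewrite -ipn_sq //; have : 0 <= 1 - t ^+ 2 by nra.
    have := ipn_ge0 ip2 (L x); nra.
  have E : n2 ip2 (L x) = n2 ip2 (T x) + t ^+ 2 * n2 ip2 (A x) + 2 * (t * RE (mu * Q x)).
    rewrite /L n2D // n2Z // cn2M cn2C hmu mulr1 ipZr // [ip2 (T x) (A x)]ipC //.
    by rewrite -conjcM' ReJ -mulrA ReRM.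
  have hA2 : n2 ip2 (A x) <= a ^+ 2.
    rewrite -ipn_sq //; apply: sq_le; first exact: ipn_ge0.
    by have := A_le x; rewrite hx mulr1.
  have hT2 : n2 ip2 (T x) <= 1.
    by have := T_sq hip1 hip2 hT hnT x; rewrite -(ipn_sq hip1) hx expr1n.
  have hRe : RE (mu * Q x) <= a.
    have -> : mu * Q x = ip2 (mu *: A x) (T x) by rewrite ipZl.
    apply: le_trans (CSR hip2 _ _) _; rewrite ipnZ // hncmu mul1r.
    have := A_le x; have := T_le hip1 hip2 hT hnT x; rewrite hx mulr1.
    have := ipn_ge0 ip2 (A x); have := ipn_ge0 ip2 (T x); nra.
  have ht2' : t ^+ 2 * n2 ip2 (A x) <= t ^+ 2 * a ^+ 2.
    by rewrite ler_wpM2l // ltW.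
  rewrite E in hLx2.
  set rho := RE (mu * Q x) in hLx2 hRe *.
  have k1 : t * rho <= t * a by rewrite ler_wpM2l // ltW.
  have k2 : t ^+ 2 <= t by nra.
  have k3 : t ^+ 2 * a ^+ 2 <= t * a ^+ 2 by rewrite ler_wpM2r ?sqr_ge0.
  have k4 : 0 <= t * a by rewrite mulr_ge0 // ltW.
  have k5 : 0 <= t * a ^+ 2 by rewrite mulr_ge0 ?sqr_ge0 // ltW.
  split; first by rewrite /Cc; lra.
  have k6 : 0 <= t * (2 * rho + 2 * t + t * a ^+ 2) by lra.
  rewrite pmulr_rge0 // in k6.
  rewrite /Cc; nra.
have [f hf] := choice step.
have [phi [y [hphi [hconv [hy1 hTy1]]]]] :=
  approx hip1 hip2 hcomp1 hunit hT hnT hK hc hC (fun n => (hf n).1) (fun n => (hf n).2.1).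
exists y; split; first by split.
apply: le_eps => e he.
have he2 : 0 < e / 2 by lra.
have [N hN] := small_ev hC he2.
have hdl : 0 < e / (4 * (a + 1)) by rewrite divr_gt0 //; lra.
set dl := e / (4 * (a + 1)) in hdl.
have hdle : 4 * (a + 1) * dl = e by rewrite /dl mulrC divfK //; lra.
have [N' hN'] := hconv dl hdl.
pose n := maxn N N'.
have hd := hN' n (leq_maxr _ _).
have hCn := hN n (leq_maxl _ _).
have hfz := (hf (phi n)).2.2.
have hmono := div_mono hC (incr_ge hphi n).
have hz1 := (hf (phi n)).1.
set z := f (phi n) in hd hfz hz1.
have hy1' : n1 y <= 1 by rewrite hy1.
have hz1' : n1 z <= 1 by rewrite hz1.
have hq := Qdiff hy1' hz1'.
have hr : RE (mu * Q z) - RE (mu * Q y) <= nc (Q z - Q y).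
  rewrite -ReB -mulrBr; apply: le_trans (Re_le_nc _) _.
  by rewrite ncM hncmu mul1r.
have hadl : a * n1 (z - y) <= a * dl by rewrite ler_wpM2l // ltW.
set q1 := Cc / (phi n).+1%:R in hfz hmono.
set q2 := Cc / n.+1%:R in hmono hCn.
have hdl0 := ltW hdl.
lra.
Qed.
End Main3.


Section Main4.
Variable R : realType.
Local Notation C := R[i].
Variables (V1 V2 : lmodType C) (ip1 : V1 -> V1 -> C) (ip2 : V2 -> V2 -> C).
Hypothesis hip1 : is_inner_product ip1.
Hypothesis hip2 : is_inner_product ip2.
Hypothesis hcomp1 : forall u : nat -> V1, cauchy_seq ip1 u -> exists l, converges_to ip1 u l.
Hypothesis hunit : exists u, ipnorm ip1 u = 1.
Local Notation n1 := (ipnorm ip1).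
Local Notation n2' := (ipnorm ip2).
Local Notation opn := (opnorm ip1 ip2).
Local Notation bnd := (bounded_op ip1 ip2).
Variable T : V1 -> V2.
Hypothesis hT : bnd T.
Hypothesis hnT : opn T = 1.
Variable K : V1 -> V2.
Hypothesis hK : compact_op ip1 ip2 K.
Hypothesis hc : opn (fun x => T x - K x) < 1.
Variable A : V1 -> V2.
Hypothesis hA : bnd A.
Local Notation a := (opn A).
Local Notation Q := (Q ip2 T A).
Local Notation MT := (MT ip1 ip2 T).

Lemma minimizer : (exists x0, MT x0) ->
  exists y, MT y /\ forall x, MT x -> nc (Q y) <= nc (Q x).
Proof.
move=> [x0 hx0].
set S := [set nc (Q x) | x in MT].
have hS : S !=set0 by exists (nc (Q x0)), x0.
have hlb : lbound S (inf S).
  by apply: ge_inf; exists 0 => _ [x _ <-]; exact: nc_ge0.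
have step n : exists x, MT x /\ nc (Q x) < inf S + 1 / (n.+1)%:R.
  have : inf S < inf S + 1 / (n.+1)%:R by rewrite ltrDl divr_gt0 ?ltr0Sn.
  by move/(inf_lt hS) => [_ [x hx <-] h]; exists x.
have [f hf] := choice step.
have hC0 : (0 : R) <= 0 by [].
have hx n : n1 (f n) = 1 by case: (hf n) => -[].
have hTx n : 1 - 0 / (n.+1)%:R <= n2 ip2 (T (f n)).
  by case: (hf n) => -[_ h] _; rewrite -ipn_sq // h mul0r subr0 expr1n.
have [phi [y [hphi [hconv [hy1 hTy1]]]]] :=
  approx hip1 hip2 hcomp1 hunit hT hnT hK hc hC0 hx hTx.
exists y; split; first by split.
move=> x hx'; apply: le_trans (hlb _ (ex_intro2 _ _ x hx' erefl)).
apply: le_eps => e he.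
have he2 : 0 < e / 2 by lra.
have h01 : (0 : R) <= 1 by [].
have [N hN] := small_ev h01 he2.
have h0 := ha hunit hA.
have hdl : 0 < e / (4 * (a + 1)) by rewrite divr_gt0 //; lra.
set dl := e / (4 * (a + 1)) in hdl.
have hdle : 4 * (a + 1) * dl = e by rewrite /dl mulrC divfK //; lra.
have [N' hN'] := hconv dl hdl.
pose n := maxn N N'.
have hd := hN' n (leq_maxr _ _).
have hCn := hN n (leq_maxl _ _).
have hfz := (hf (phi n)).2.
have hmono := div_mono h01 (incr_ge hphi n).
have hz1 := hx (phi n).
set z := f (phi n) in hd hfz hz1.
have hy1' : n1 y <= 1 by rewrite hy1.
have hz1' : n1 z <= 1 by rewrite hz1.
have hq := Qdiff hip1 hip2 hunit hT hnT hA hz1' hy1'.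
rewrite ipnB // in hq.
have hadl : a * n1 (z - y) <= a * dl by rewrite ler_wpM2l // ltW.
have htri : nc (Q y) <= nc (Q z) + nc (Q y - Q z).
  by have := ncD (Q z) (Q y - Q z); rewrite addrC subrK.
set q1 := 1 / (phi n).+1%:R in hfz hmono.
set q2 := 1 / n.+1%:R in hmono hCn.
have hdl0 := ltW hdl.
lra.
Qed.
End Main4.


Section CX2.
Variable R : realType.
Local Notation C := R[i].
Lemma cn2N (x : C) : cn2 (- x) = cn2 x.
Proof. by rewrite /cn2 ReN ImN !sqrrN. Qed.
Lemma rot (v : C) : exists g, cn2 g = 1 /\ IM ((g^*)%C * v) = 0.
Proof.
have [->|hv] := eqVneq v 0.
  by exists 1; rewrite /cn2 Re1 Im1 mulr0 Im0; split => //; rewrite expr1n expr0n addr0.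
have hc : 0 < cn2 v.
  rewrite lt_def cn2_ge0 andbT; apply/negP => /eqP h; move: hv.
  by rewrite (cn2_eq0 h) eqxx.
have hn : 0 < nc v by rewrite /nc sqrtr_gt0.
exists ((((nc v)^-1)%:C)%C * v); split.
  by rewrite cn2M cn2C -nc_sq exprVn mulVf // gt_eqF // exprn_gt0.
by rewrite conjcM' conjcR' -mulrA [(v^*)%C * v]mulrC mulcJ realcM ImC.
Qed.
Lemma cn2_lin (x y : C) (r : R) :
  cn2 (x + y * (r%:C)%C) = cn2 x + 2 * r * RE ((x^*)%C * y) + r ^+ 2 * cn2 y.
Proof.
rewrite /cn2; case: x => a b; case: y => c d /=; ring.
Qed.
Lemma nc_pos (x : C) : x != 0 -> 0 < nc x.
Proof.
move=> hx; rewrite /nc sqrtr_gt0 lt_def cn2_ge0 andbT; apply/negP => /eqP h.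
by move: hx; rewrite (cn2_eq0 h) eqxx.
Qed.
End CX2.

Section Main5.
Variable R : realType.
Local Notation C := R[i].
Variables (V1 V2 : lmodType C) (ip1 : V1 -> V1 -> C) (ip2 : V2 -> V2 -> C).
Hypothesis hip1 : is_inner_product ip1.
Hypothesis hip2 : is_inner_product ip2.
Hypothesis hcomp1 : forall u : nat -> V1, cauchy_seq ip1 u -> exists l, converges_to ip1 u l.
Hypothesis hunit : exists u, ipnorm ip1 u = 1.
Local Notation n1 := (ipnorm ip1).
Local Notation n2' := (ipnorm ip2).
Local Notation opn := (opnorm ip1 ip2).
Local Notation bnd := (bounded_op ip1 ip2).
Variable T : V1 -> V2.
Hypothesis hT : bnd T.
Hypothesis hnT : opn T = 1.
Variable K : V1 -> V2.
Hypothesis hK : compact_op ip1 ip2 K.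
Hypothesis hc : opn (fun x => T x - K x) < 1.
Variable A : V1 -> V2.
Hypothesis hA : bnd A.
Local Notation Q := (Q ip2 T A).
Local Notation MT := (MT ip1 ip2 T).

Lemma realc1 : ((1 : R)%:C)%C = 1 :> C. Proof. by []. Qed.

Lemma zero_found (hbj : bj_orth ip1 ip2 T A) : exists x, MT x /\ Q x = 0.
Proof.
have h1 : cn2 (1 : C) = 1 by rewrite /cn2 Re1 Im1 expr1n expr0n addr0.
have [x0 [hx0 _]] := halfplane hip1 hip2 hcomp1 hunit hT hnT hK hc hA hbj h1.
have [y [hy hmin]] :=
  minimizer hip1 hip2 hcomp1 hunit hT hnT hK hc hA (ex_intro _ x0 hx0).
have [hq|hq] := eqVneq (Q y) 0; first by exists y.
exfalso.
set q0 := Q y in hq hmin.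
have hm := nc_pos hq.
set m := nc q0 in hm hmin.
have hm2 : cn2 q0 = m ^+ 2 by rewrite /m nc_sq.
pose mu := - ((((m^-1)%:C)%C) * (q0^*)%C).
have hmu : cn2 mu = 1.
  by rewrite /mu cn2N cn2M cn2C cn2J hm2 exprVn mulVf // gt_eqF // exprn_gt0.
have [x1 [hx1 hre]] := halfplane hip1 hip2 hcomp1 hunit hT hnT hK hc hA hbj hmu.
set q1 := Q x1 in hre.
have hq0J : (q0^*)%C = - ((m%:C)%C) * mu.
  by rewrite /mu mulrN mulNr opprK mulrA realcM divff ?gt_eqF // realc1 mul1r.
have hmq0 : RE (mu * q0) = - m.
  rewrite /mu mulNr -mulrA [(q0^*)%C * q0]mulrC mulcJ realcM ReN ReC hm2.
  by rewrite expr2 mulKf // gt_eqF.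
have hD : q1 - q0 != 0.
  apply/negP => /eqP h.
  have e : q1 = q0 by apply/eqP; rewrite -subr_eq0 h.
  by move: hre; rewrite e hmq0 oppr_ge0 leNgt hm.
set D := q1 - q0 in hD.
set S01 := ip2 (A y) (T x1).
set S10 := ip2 (A x1) (T y).
set g := ip1 y x1.
set P := (S01 - q0 * g) / D.
set Rr := (S10 - q0 * (g^*)%C) / D.
have [gam [hgam hIm]] := rot (P - (Rr^*)%C).
set w := (gam^*)%C * P + gam * Rr.
have hw : IM w = 0.
  have e : gam * Rr = (((gam^*)%C * (Rr^*)%C)^*)%C by rewrite conjcM' !conjcK'.
  by rewrite /w e ImD ImJ -ImB -mulrBr.
set W := RE w.
have hwW : w = (W%:C)%C by apply: cx_eq; rewrite ?ReC ?ImC.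
have hcD := cn2_ge0 D.
have hden : 0 < 4 * (`|W| + 1) * (cn2 D + 1).
  have hW1 : 0 < `|W| + 1 by have := normr_ge0 W; lra.
  have hD1 : 0 < cn2 D + 1 by lra.
  by rewrite !mulr_gt0.
pose sig := Num.min (1/2) (m ^+ 2 / (4 * (`|W| + 1) * (cn2 D + 1))).
have hsig0 : 0 < sig.
  by rewrite lt_min; apply/andP; split; [lra | rewrite divr_gt0 // exprn_gt0].
have hsig1 : sig <= 1/2 by rewrite ge_min lexx.
have hsig2 : sig <= m ^+ 2 / (4 * (`|W| + 1) * (cn2 D + 1)).
  by rewrite ge_min lexx orbT.
pose s := if 0 <= W then sig else - sig.
have hsW : s * W = sig * `|W|.
  rewrite /s; case: ifP => hW; first by rewrite ger0_norm.
  have hW' : W < 0 by rewrite ltNge hW.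
  by rewrite ltr0_norm // mulrN mulNr.
have hs2 : s ^+ 2 = sig ^+ 2 by rewrite /s; case: ifP => _; rewrite ?sqrrN.
have hsabs : `|s| = sig.
  by rewrite /s; case: ifP => _; rewrite ?normrN gtr0_norm.
pose bt := (s%:C)%C * gam.
have hncb : nc bt = sig by rewrite /bt ncM ncR hsabs nc1 // mulr1.
pose u := y + bt *: x1.
have hu1 : 1/2 <= n1 u.
  have := ipnD hip1 u (- (bt *: x1)).
  rewrite ipnN // ipnZ // hncb hx1.1 /u addrK hy.1; lra.
have hu0 : 0 < n1 u by lra.
have hiso := span_iso hip1 hip2 hT hnT bt hy hx1.
have hMT := normalize hip1 hip2 hT hu0 hiso.
set N := n2 ip1 u.
have hN : N = n1 u ^+ 2 by rewrite ipn_sq.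
have hN4 : 1/4 <= N.
  have h12 : (0:R) <= 1/2 by lra.
  by rewrite hN; have := sq_le h12 hu1; lra.
have hbtJ : (bt^*)%C = (s%:C)%C * (gam^*)%C by rewrite /bt conjcM' conjcR'.
have hyy : ip1 y y = 1 by rewrite ipxx // -ipn_sq // hy.1 expr1n.
have hxx : ip1 x1 x1 = 1 by rewrite ipxx // -ipn_sq // hx1.1 expr1n.
have eQ : Q u = q0 + (bt^*)%C * S01 + bt * S10 + bt * (bt^*)%C * q1.
  have -> : Q u = ip2 (A u) (T u) by [].
  rewrite /u (linD hA.1) (linZ hA.1) (linD hT.1) (linZ hT.1) (ipDl hip2) !(ipDr hip2) !(ipZl hip2) !(ipZr hip2).
  rewrite -[ip2 (A x1) (T x1)]/q1 -[ip2 (A y) (T y)]/q0 -/S01 -/S10.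
  ring.
have eI : ip1 u u = 1 + (bt^*)%C * g + bt * (g^*)%C + bt * (bt^*)%C.
  rewrite /u (ipDl hip1) !(ipDr hip1) !(ipZl hip1) !(ipZr hip1) hyy hxx -/g [ip1 x1 y](ipC hip1) -/g.
  ring.
have hQu : Q u = q0 * ip1 u u +
    D * ((s%:C)%C * w + (s%:C)%C * (s%:C)%C * (gam * (gam^*)%C)).
  have hDw : D * w = (gam^*)%C * (S01 - q0 * g) + gam * (S10 - q0 * (g^*)%C).
    by rewrite /w /P /Rr; field.
  rewrite eQ eI hbtJ [D * (_ + _)]mulrDr (mulrCA D) hDw /D /bt; ring.
have hQu2 : Q u = q0 * (N%:C)%C + D * (((s * W + s ^+ 2))%:C)%C.
  rewrite hQu (ipxx hip1) -/N mulcJ hgam realc1 mulr1 hwW !realcM realcD.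
  by rewrite expr2.
pose u' := (((n1 u)^-1)%:C)%C *: u.
have hQu' : Q u' = q0 + D * ((((s * W + s ^+ 2) / N))%:C)%C.
  have -> : Q u' = ip2 (A u') (T u') by [].
  rewrite /u' (linZ hA.1) (linZ hT.1) (ipZl hip2) (ipZr hip2) conjcR' mulrA realcM.
  rewrite -[ip2 (A u) (T u)]/(Q u) hQu2.
  have hNi : (n1 u)^-1 * (n1 u)^-1 = N^-1 by rewrite hN expr2 invfM.
  have hN0 : N != 0 by apply/negP => /eqP h; move: hN4; rewrite h; lra.
  rewrite hNi mulrDr mulrCA realcM mulVf // realc1 mulr1; congr (_ + _).
  by rewrite mulrCA realcM [N^-1 * _]mulrC.
set r := (s * W + s ^+ 2) / N in hQu'.
have hX : s * W + s ^+ 2 = sig * `|W| + sig ^+ 2 by rewrite hsW hs2.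
have hZ := normr_ge0 W.
have hN0 : 0 < N by lra.
have hr0 : 0 < r.
  rewrite /r hX divr_gt0 //; have : 0 < sig ^+ 2 by rewrite exprn_gt0.
  have : 0 <= sig * `|W| by rewrite mulr_ge0 // ltW.
  lra.
have hr4 : r <= 4 * (sig * `|W| + sig ^+ 2).
  rewrite /r hX ler_pdivrMr //.
  have : 0 <= sig * `|W| + sig ^+ 2 by rewrite addr_ge0 ?mulr_ge0 ?sqr_ge0 // ltW.
  nra.
have hss : sig ^+ 2 <= sig by nra.
have k2 : sig * (4 * (`|W| + 1) * (cn2 D + 1)) <= m ^+ 2.
  by rewrite -ler_pdivlMr.
have k3 : r * cn2 D <= 4 * (sig * `|W| + sig) * cn2 D.
  by apply: ler_wpM2r => //; lra.
have k4 : 0 < sig * `|W| + sig.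
  have : 0 <= sig * `|W| by rewrite mulr_ge0 // ltW.
  lra.
have hr1 : r * cn2 D < m ^+ 2 by lra.
have hRe : RE ((q0^*)%C * D) <= - m ^+ 2.
  rewrite /D mulrBr ReB [(q0^*)%C * q0]mulrC mulcJ ReC hm2 hq0J -mulrA mulNr ReN ReRM.
  have : 0 <= m * RE (mu * q1) by rewrite mulr_ge0 // ltW.
  lra.
have hcn : cn2 (Q u') < m ^+ 2.
  rewrite hQu' cn2_lin hm2.
  have k5 : 2 * r * RE ((q0^*)%C * D) <= 2 * r * (- m ^+ 2).
    by rewrite ler_wpM2l // mulr_ge0 // ltW.
  have k6 : r * (r * cn2 D) <= r * m ^+ 2 by rewrite ler_wpM2l ?ltW.
  have k7 : 0 < r * m ^+ 2 by rewrite mulr_gt0 // exprn_gt0.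
  have e : r ^+ 2 * cn2 D = r * (r * cn2 D) by rewrite expr2 mulrA.
  rewrite e; lra.
have hnc : nc (Q u') < m.
  rewrite /nc -[m in _ < m](@ger0_norm _ m) ?ltW // -sqrtr_sqr ltr_sqrt //.
  by rewrite exprn_gt0.
have := hmin _ hMT; rewrite -/u'; lra.
Qed.
End Main5.

Unset Implicit Arguments.
Set Strict Implicit.


Theorem theorem2p3 (R : realType)
    (V1 V2 : lmodType R[i])
    (ip1 : V1 -> V1 -> R[i]) (ip2 : V2 -> V2 -> R[i])
    (H1 : is_hilbert ip1) (H2 : is_hilbert ip2)
    (T : V1 -> V2) (hT : bounded_op ip1 ip2 T)
    (hnT : opnorm ip1 ip2 T = 1)
    (hdist : dist_compact ip1 ip2 T < 1) :
  forall A : V1 -> V2, bounded_op ip1 ip2 A ->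
    (bj_orth ip1 ip2 T A <->
     exists2 x, x \in norm_attaining_set ip1 ip2 T & ip2 (A x) (T x) = 0).
Proof.
have [hip1 hcomp1] := H1; have [hip2 _] := H2.
have hunit : exists u, ipnorm ip1 u = 1.
  case: (pselect (exists u, ipnorm ip1 u = 1)) => // hn; exfalso.
  have e : [set ipnorm ip2 (T x) | x in [set x | ipnorm ip1 x = 1]] = set0.
    by apply/seteqP; split => // y [x hx e]; apply: hn; exists x.
  by move: hnT; rewrite /opnorm e sup0 => /eqP; rewrite eq_sym oner_eq0.
have hne : [set opnorm ip1 ip2 (fun x => T x - K x) | K in [set K | compact_op ip1 ip2 K]] !=set0.
  exists (opnorm ip1 ip2 (fun x => T x - 0)), (fun _ => 0) => //=.
  by have := compact0 ip1 hip2.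
have [_ [K hK <-] hc] := inf_lt hne hdist.
move=> A hA; split.
  move=> hbj.
  have [x [hx hq]] := zero_found hip1 hip2 hcomp1 hunit hT hnT hK hc hA hbj.
  exists x => //; rewrite in_setE /norm_attaining_set /= hnT; exact: hx.
move=> [x hx hq] lambda.
rewrite in_setE /norm_attaining_set /= hnT in hx; case: hx => hx1 hx2.
rewrite hnT.
have hL := bnd_comb hip1 hip2 lambda hT hA.
apply: le_trans (opn_ub hL hx1).
have hn : 1 <= n2 ip2 (T x + lambda *: A x).
  rewrite n2D // n2Z // (ipZr hip2) [ip2 (T x) (A x)](ipC hip2) hq conjc0 mulr0 Re0 mulr0 addr0.
  rewrite -ipn_sq // hx2 expr1n.
  have := cn2_ge0 lambda; have := n2_ge0 hip2 (A x); nra.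
rewrite ipnE -sqrtr1 ler_sqrt //; lra.
Qed.
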